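(* Let $(M,\gamma)$ be an $n$-dimensional (pseudo-)Riemannian manifold with local coordinates $q^a$, nondegenerate metric $\gamma_{ab}(q)$, Levi-Civita connection coefficients $\Gamma^a_{bc}(q)$, and let $Q^a(q)$ be a smooth vector field. Consider the autonomous system $$\ddot q^{a}=-\Gamma^{a}_{bc}(q)\dot q^{b}\dot q^{c}-Q^{a}(q).$$ Then each of the following functions is a first integral of this system (i.e. is constant along every solution), provided the stated conditions hold. Indices are raised and lowered with $\gamma$. (CFI 1) Let $\ell\ge 1$ be an integer. Let $L_{(N)ab}(q)$, $N=0,2,\dots,2\ell$, be symmetric tensors such that $L_{(N)(ab;c)}$ is a Killing tensor of order 3 for $N=0,2,\dots,2\ell-2$ and $L_{(2\ell)ab}$ is a Killing tensor of order 2; let $L_{(A)a}(q)$, $A=1,3,\dots,2\ell-1$, be covector fields and $G(q)$ a function satisfying $$L_{(k-1)(a;b)}=-\tfrac{3}{k-1}L_{(k-2)(ab;c)}Q^{c}-kL_{(k)ab},\quad k=2,4,\dots,2\ell,$$ $$\big(L_{(2\ell-1)c}Q^{c}\big)_{,a}=4\ell\,L_{(2\ell)ab}Q^{b},$$ $$\big(L_{(k-2)c}Q^{c}\big)_{,a}=2(k-1)L_{(k-1)ab}Q^{b}-k(k-1)L_{(k)a},\quad k=3,5,\dots,2\ell-1,$$ $$G_{,a}=2L_{(0)ab}Q^{b}-L_{(1)a}.$$ Then $$J^{(3,1)}_{\ell}=\Big(-\sum_{j=0}^{\ell-1}\tfrac{t^{2j+1}}{2j+1}L_{(2j)(ab;c)}\Big)\dot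 q^a\dot q^b\dot q^c+\Big(\sum_{j=0}^{\ell}t^{2j}L_{(2j)ab}\Big)\dot q^a\dot q^b+\Big(\sum_{j=1}^{\ell}t^{2j-1}L_{(2j-1)a}\Big)\dot q^a+\sum_{j=1}^{\ell}\tfrac{t^{2j}}{2j}L_{(2j-1)c}Q^c+G(q)$$ is a first integral. (CFI 2) Let $\ell\ge 0$ be an integer. Let $L_{(0)abc}(q)$ be a totally symmetric Killing tensor of order 3; let $L_{(N)ab}(q)$, $N=1,3,\dots,2\ell+1$, be symmetric tensors such that $L_{(N)(ab;c)}$ is a Killing tensor of order 3 for $N=1,3,\dots,2\ell-1$ and $L_{(2\ell+1)ab}$ is a Killing tensor of order 2; let $L_{(A)a}(q)$, $A=0,2,\dots,2\ell$, be covector fields satisfying $$L_{(0)(a;b)}=3L_{(0)abc}Q^{c}-L_{(1)ab},$$ $$L_{(k-1)(a;b)}=-\tfrac{3}{k-1}L_{(k-2)(ab;c)}Q^{c}-kL_{(k)ab},\quad k=3,5,\dots,2\ell+1,$$ $$\big(L_{(2\ell)c}Q^{c}\big)_{,a}=2(2\ell+1)L_{(2\ell+1)ab}Q^{b},$$ $$\big(L_{(k-2)c}Q^{c}\big)_{,a}=2(k-1)L_{(k-1)ab}Q^{b}-k(k-1)L_{(k)a},\quad k=2,4,\dots,2\ell.$$ Then $$J^{(3,2)}_{\ell}=\Big(L_{(0)abc}-\sum_{j=1}^{\ell}\tfrac{t^{2j}}{2j}L_{(2j-1)(ab;c)}\Big)\dot q^a\dot q^b\dot q^c+\Big(\sum_{j=0}^{\ell}t^{2j+1}L_{(2j+1)ab}\Big)\dot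 q^a\dot q^b+\Big(\sum_{j=0}^{\ell}t^{2j}L_{(2j)a}\Big)\dot q^a+\sum_{j=0}^{\ell}\tfrac{t^{2j+1}}{2j+1}L_{(2j)c}Q^c$$ is a first integral. (CFI 3) Let $\lambda\neq0$ be a constant, $L_{ab}(q)$ a symmetric tensor such that $L_{(ab;c)}$ is a Killing tensor of order 3, and $L_a(q)$ a covector field satisfying $$L_{(a;b)}=-\tfrac{3}{\lambda}L_{(ab;c)}Q^{c}-\lambda L_{ab},\qquad (L_cQ^c)_{,a}=2\lambda L_{ab}Q^b-\lambda^2L_a.$$ Then $$I^{(3)}_{e}=e^{\lambda t}\big(-L_{(ab;c)}\dot q^a\dot q^b\dot q^c+\lambda L_{ab}\dot q^a\dot q^b+\lambda L_a\dot q^a+L_aQ^a\big)$$ is a first integral.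
   Context: Einstein summation convention is used; a comma denotes a partial derivative, a semicolon denotes the covariant derivative of the Levi-Civita connection of $\gamma$, and round brackets around indices denote symmetrization (with weight $1/m!$). A Killing tensor of order $m$ is a totally symmetric covariant tensor $C_{a_1\dots a_m}$ with $C_{(a_1\dots a_m;b)}=0$. A first integral is a function of $(t,q,\dot q)$ whose total time derivative vanishes along every solution of the system. *)

(* Defs.v *)
From HB Require Import structures.
From mathcomp Require Import all_boot all_order all_algebra all_fingroup.
From mathcomp Require Import all_classical all_reals all_analysis.
Set Implicit Arguments. Unset Strict Implicit. Unset Printing Implicit Defensive.
Import Order.TTheory GRing.Theory Num.Theory.
Import numFieldNormedType.Exports.
Local Open Scope ring_scope.
Local Open Scope classical_set_scope.

Section Defs.
Variable R : realType.
Variable n : nat.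
Local Notation pt := 'rV[R]_n.

Definition ecoord (i : 'I_n) : pt := delta_mx 0 i.
Definition pd (i : 'I_n) (f : pt -> R) : pt -> R := fun x => derive f x (ecoord i).
Definition iter_pd (s : seq 'I_n) (f : pt -> R) : pt -> R := foldr pd f s.

Definition smooth_on (U : set pt) (f : pt -> R) : Prop :=
  forall (s : seq 'I_n) (x : pt), U x -> differentiable (iter_pd s f) x.

Definition metric_on (U : set pt) (g : pt -> 'M[R]_n) : Prop :=
  (forall i j, smooth_on U (fun x => g x i j)) /\
  (forall x, U x -> (g x)^T = g x /\ g x \in unitmx).

Definition christoffel (g : pt -> 'M[R]_n) (a b c : 'I_n) (x : pt) : R :=
  2^-1 * \sum_(d < n) (invmx (g x)) a d *
    (pd b (fun y => g y d c) x + pd c (fun y => g y d b) x - pd d (fun y => g y b c) x).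

Definition tfield (m : nat) := {ffun 'I_m -> 'I_n} -> pt -> R.

Definition tinit m (idx : {ffun 'I_m.+1 -> 'I_n}) : {ffun 'I_m -> 'I_n} :=
  [ffun i => idx (widen_ord (leqnSn m) i)].
Definition tlast m (idx : {ffun 'I_m.+1 -> 'I_n}) : 'I_n := idx ord_max.
Definition tset m (idx : {ffun 'I_m -> 'I_n}) (k : 'I_m) (c : 'I_n) : {ffun 'I_m -> 'I_n} :=
  [ffun i => if i == k then c else idx i].
Definition tperm m (idx : {ffun 'I_m -> 'I_n}) (s : 'S_m) : {ffun 'I_m -> 'I_n} :=
  [ffun i => idx (s i)].

(* covariant derivative: T_{a_1..a_m;b} (the derivative index b is the last one) *)
Definition covd (g : pt -> 'M[R]_n) m (T : tfield m) : tfield m.+1 := fun idx x =>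
  pd (tlast idx) (T (tinit idx)) x
  - \sum_(k < m) \sum_(c < n)
      christoffel g c (tlast idx) (tinit idx k) x * T (tset (tinit idx) k c) x.

Definition symz m (T : tfield m) : tfield m := fun idx x =>
  (m`!%:R)^-1 * \sum_(s : 'S_m) T (tperm idx s) x.

Definition symcov (g : pt -> 'M[R]_n) m (T : tfield m) : tfield m.+1 := symz (covd g T).

Definition tsymmetric (U : set pt) m (T : tfield m) : Prop :=
  forall idx (s : 'S_m) x, U x -> T (tperm idx s) x = T idx x.
Definition tsmooth (U : set pt) m (T : tfield m) : Prop := forall idx, smooth_on U (T idx).

Definition killing (g : pt -> 'M[R]_n) (U : set pt) m (C : tfield m) : Prop :=
  tsymmetric U C /\ forall idx x, U x -> symz (covd g C) idx x = 0.

Definition contr m (T : tfield m) (x : pt) (v : pt) : R :=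
  \sum_(idx : {ffun 'I_m -> 'I_n}) T idx x * \prod_(i < m) v 0 (idx i).

Definition ix1 (a : 'I_n) : {ffun 'I_1 -> 'I_n} := [ffun _ => a].
Definition ix2 (a b : 'I_n) : {ffun 'I_2 -> 'I_n} :=
  [ffun i => if val i == 0%N then a else b].
Definition ix3 (a b c : 'I_n) : {ffun 'I_3 -> 'I_n} :=
  [ffun i => if val i == 0%N then a else if val i == 1%N then b else c].

Definition c1 (T : tfield 1) (Q : pt -> pt) : pt -> R := fun x =>
  \sum_(c < n) T (ix1 c) x * Q x 0 c.
Definition c2 (T : tfield 2) (a : 'I_n) (Q : pt -> pt) : pt -> R := fun x =>
  \sum_(b < n) T (ix2 a b) x * Q x 0 b.
Definition c3 (T : tfield 3) (a b : 'I_n) (Q : pt -> pt) : pt -> R := fun x =>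
  \sum_(c < n) T (ix3 a b c) x * Q x 0 c.

Definition is_solution (g : pt -> 'M[R]_n) (Q : pt -> pt) (U : set pt)
    (I : set R) (q : R -> pt) : Prop :=
  open I /\ forall t, I t ->
    [/\ U (q t), derivable q t 1, derivable (derive1 q) t 1 &
      forall a : 'I_n, derive1 (derive1 q) t 0 a =
        - (\sum_(b < n) \sum_(c < n)
             christoffel g a b c (q t) * derive1 q t 0 b * derive1 q t 0 c)
        - Q (q t) 0 a].

Definition first_integral (g : pt -> 'M[R]_n) (Q : pt -> pt) (U : set pt)
    (J : R -> pt -> pt -> R) : Prop :=
  forall (I : set R) (q : R -> pt), is_solution g Q U I q -> forall t, I t ->
    derivable (fun s => J s (q s) (derive1 q s)) t 1 /\
    derive1 (fun s => J s (q s) (derive1 q s)) t = 0.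

End Defs.

(* Main.v *)
Require Import Defs.
From HB Require Import structures.
From mathcomp Require Import all_boot all_order all_algebra all_fingroup.
From mathcomp Require Import all_classical all_reals all_analysis.
From mathcomp Require Import ring lra zify.
Import Order.TTheory GRing.Theory Num.Theory.
Import numFieldNormedType.Exports.
Local Open Scope ring_scope.
Local Open Scope classical_set_scope.
Set Implicit Arguments. Unset Strict Implicit. Unset Printing Implicit Defensive.

Lemma diff_near (R : realType) (V W : normedModType R) (f g : V -> W) (x : V) :
  (\forall y \near x, f y = g y) -> differentiable g x -> differentiable f x.
Proof.
move=> fg dg.
have fxgx : f x = g x := nbhs_singleton fg.
have Ho : f \o shift x = cst (f x) + 'd g x +o_ 0 id.
  apply/eqaddoP => eps eps0.
  have /eqaddoP := diff_locally dg => /(_ eps eps0) Hg.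
  move/nbhs0P : fg => fg0.
  near=> h.
  have fgh : f (x + h) = g (x + h) by near: h.
  rewrite !fctE /= fxgx [h + x]addrC fgh addrC.
  have : `|((g \o shift x) - (cst (g x) + 'd g x)) h| <= eps * `|id h| by near: h.
  by rewrite !fctE /= [h + x]addrC addrC.
have dfe : 'd f x = 'd g x :> (V -> W) by apply: diff_unique => //; exact: diff_continuous.
by apply/diff_locallyP; rewrite dfe; split => //; exact: diff_continuous.
Unshelve. all: by end_near. Qed.

Section Aux.
Context (R : realType) (n : nat).
Local Notation pt := 'rV[R]_n.

Lemma rv_decomp (v : pt) : v = \sum_(b < n) v 0 b *: ecoord R b.
Proof.
apply/rowP => j; rewrite summxE (bigD1 j) //= big1 => [|b bj].
  by rewrite !mxE !eqxx mulr1 addr0.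
by rewrite !mxE eqxx /= eq_sym (negbTE bj) mulr0.
Qed.

Lemma chain_is_derive (f : pt -> R) (q : R -> pt) t :
  differentiable f (q t) -> derivable q t 1 ->
  is_derive t 1 (f \o q) (\sum_(b < n) pd b f (q t) * derive1 q t 0 b).
Proof.
move=> df dq; have dq' : differentiable q t by apply/derivable1_diffP.
have dfq : differentiable (f \o q) t by apply: differentiable_comp.
apply: DeriveDef; first by apply/derivable1_diffP.
rewrite deriveE // diff_comp // /= -derive1E' //.
rewrite {1}(rv_decomp (derive1 q t)) linear_sum; apply: eq_bigr => b _.
by rewrite linearZ /= /pd deriveE // mulrC.
Qed.


Lemma coord_is_derive (p : R -> pt) t (a : 'I_n) :
  derivable p t 1 -> is_derive t 1 (fun s => p s 0 a) (derive1 p t 0 a).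
Proof.
move=> dp; have dpa : derivable (fun s => p s 0 a) t 1.
  by move/derivable_mxP : dp; apply.
apply: DeriveDef => //.
by rewrite derive1E derive_mx // mxE.
Qed.

Lemma prod_excl_max m (G : 'I_m.+1 -> R) :
  \prod_(i < m.+1 | i != ord_max) G i = \prod_(i < m) G (widen_ord (leqnSn m) i).
Proof.
rewrite big_mkcond big_ord_recr /= eqxx mulr1; apply: eq_bigr => i _.
rewrite ifT //.
by apply/eqP => /(congr1 val) /= E; move: (ltn_ord i); rewrite E ltnn.
Qed.

Lemma prod_excl m (G : 'I_m.+1 -> R) (k : 'I_m) :
  \prod_(i < m.+1 | i != widen_ord (leqnSn m) k) G i =
  (\prod_(i < m | i != k) G (widen_ord (leqnSn m) i)) * G ord_max.
Proof.
rewrite big_mkcond big_ord_recr /= ifT; last first.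
  by apply/eqP => /(congr1 val) /= E; move: (ltn_ord k); rewrite -E ltnn.
congr (_ * _); rewrite [RHS]big_mkcond; apply: eq_bigr => i _.
have -> : (widen_ord (leqnSn m) i != widen_ord (leqnSn m) k) = (i != k) by [].
by [].
Qed.

Lemma prod_is_derive m (F : 'I_m -> R -> R) (dF : 'I_m -> R) (t : R) :
  (forall i, is_derive t (1:R) (F i) (dF i)) ->
  is_derive t (1:R) (fun s => \prod_(i < m) F i s)
    (\sum_(k < m) dF k * \prod_(i < m | i != k) F i t).
Proof.
elim: m F dF => [|m IH] F dF HF.
  rewrite big_ord0.
  have -> : (fun s => \prod_(i < 0) F i s) = cst 1 by apply/funext => s; rewrite big_ord0.
  exact: is_derive_cst.
have -> : (fun s => \prod_(i < m.+1) F i s) =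
  (fun s => \prod_(i < m) F (widen_ord (leqnSn m) i) s) * F ord_max.
  by apply/funext => s; rewrite big_ord_recr.
have IH' := IH (fun i => F (widen_ord (leqnSn m) i)) (fun i => dF (widen_ord (leqnSn m) i)) (fun i => HF _).
apply: is_derive_eq.
rewrite big_ord_recr /= prod_excl_max.
under [in RHS]eq_bigr => k _ do rewrite prod_excl.
rewrite addrC [X in _ + X]/GRing.scale /= mulr_sumr [X in X + _]/GRing.scale /=.
congr (_ + _); first exact: mulrC.
apply: eq_big => // k _ /=; ring.
Qed.


Lemma bigsum_is_derive (I : finType) (h : I -> R -> R) (dh : I -> R) (t : R) :
  (forall i, is_derive t (1:R) (h i) (dh i)) ->
  is_derive t (1:R) (fun s => \sum_i h i s) (\sum_i dh i).
Proof.
move=> H; rewrite -fct_sumE.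
by elim/big_ind2 : _ => // [|] *; [exact: is_derive_cst|exact: is_deriveD].
Qed.

Lemma contr_is_derive m (T : tfield R n m) (q : R -> pt) (t : R) :
  derivable q t 1 -> derivable (derive1 q) t 1 ->
  (forall idx, differentiable (T idx) (q t)) ->
  is_derive t (1:R) (fun s => contr T (q s) (derive1 q s))
   (\sum_idx ((\sum_(b < n) pd b (T idx) (q t) * derive1 q t 0 b) *
                \prod_(i < m) derive1 q t 0 (idx i)
     + T idx (q t) * \sum_(k < m) derive1 (derive1 q) t 0 (idx k) *
                \prod_(i < m | i != k) derive1 q t 0 (idx i))).
Proof.
move=> dq ddq dT; rewrite /contr; apply: bigsum_is_derive => idx.
have H1 := chain_is_derive (dT idx) dq.
have H2 := @prod_is_derive m (fun i s => derive1 q s 0 (idx i)) _ t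
  (fun i => coord_is_derive (idx i) ddq).
have := is_deriveM H1 H2.
have -> : (T idx \o q) * (fun s => \prod_(i < m) derive1 q s 0 (idx i)) =
   (fun s => T idx (q s) * \prod_(i < m) derive1 q s 0 (idx i)) by [].
move=> H; apply: is_derive_eq; rewrite /GRing.scale /= addrC; congr (_ + _).
exact: mulrC.
Qed.


Definition ext m (idx : {ffun 'I_m -> 'I_n}) (b : 'I_n) : {ffun 'I_m.+1 -> 'I_n} :=
  [ffun i => if unlift ord_max i is Some j then idx j else b].

Lemma widen_lift m (i : 'I_m) : widen_ord (leqnSn m) i = lift ord_max i.
Proof. by apply: val_inj; rewrite /= /bump leqNgt ltn_ord add0n. Qed.

Lemma ext_widen m idx b (i : 'I_m) : ext idx b (widen_ord (leqnSn m) i) = idx i.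
Proof. by rewrite /ext ffunE widen_lift liftK. Qed.

Lemma ext_max m idx b : ext idx b (@ord_max m) = b.
Proof. by rewrite /ext ffunE unlift_none. Qed.

Lemma tinit_ext m idx b : tinit (@ext m idx b) = idx.
Proof. by apply/ffunP => i; rewrite /tinit ffunE ext_widen. Qed.

Lemma tlast_ext m idx b : tlast (@ext m idx b) = b.
Proof. exact: ext_max. Qed.

Lemma ext_tinit m (f : {ffun 'I_m.+1 -> 'I_n}) : ext (tinit f) (tlast f) = f.
Proof.
apply/ffunP => i; rewrite /ext ffunE.
case: unliftP => [j ->|->]; last by [].
by rewrite /tinit ffunE widen_lift.
Qed.

Lemma sum_ext m (F : {ffun 'I_m.+1 -> 'I_n} -> R) :
  \sum_f F f = \sum_(idx : {ffun 'I_m -> 'I_n}) \sum_(b < n) F (ext idx b).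
Proof.
rewrite pair_big /=.
rewrite (reindex (fun p : {ffun 'I_m -> 'I_n} * 'I_n => ext p.1 p.2)) //=.
exists (fun f => (tinit f, tlast f)) => [[idx b] _|f _] /=.
  by rewrite tinit_ext tlast_ext.
exact: ext_tinit.
Qed.

Lemma prod_ext m (v : pt) idx b :
  \prod_(i < m.+1) v 0 (@ext m idx b i) = (\prod_(i < m) v 0 (idx i)) * v 0 b.
Proof.
rewrite big_ord_recr /= ext_max; congr (_ * _); apply: eq_bigr => i _.
by rewrite ext_widen.
Qed.


Lemma tset_at m (idx : {ffun 'I_m -> 'I_n}) k c : tset idx k c k = c.
Proof. by rewrite /tset ffunE eqxx. Qed.

Lemma tset_ne m (idx : {ffun 'I_m -> 'I_n}) k c i : i != k -> tset idx k c i = idx i.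
Proof. by rewrite /tset ffunE => /negbTE ->. Qed.

Lemma tset_tset m (idx : {ffun 'I_m -> 'I_n}) k c : tset (tset idx k c) k (idx k) = idx.
Proof.
apply/ffunP => i; rewrite /tset !ffunE.
by case: eqP => [->|]; rewrite ?eqxx.
Qed.

Lemma sum_tset m (k : 'I_m) (F : {ffun 'I_m -> 'I_n} -> 'I_n -> R) :
  \sum_idx \sum_(c < n) F idx c = \sum_idx \sum_(c < n) F (tset idx k c) (idx k).
Proof.
rewrite !pair_big /=.
pose phi := fun p : {ffun 'I_m -> 'I_n} * 'I_n => (tset p.1 k p.2, p.1 k).
have phiK : involutive phi.
  by move=> [idx c]; rewrite /phi /= tset_tset tset_at.
rewrite (reindex_inj (inv_inj phiK)) /=.
by apply: eq_bigr => -[idx c] _.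
Qed.

Lemma prod_tset m (v : pt) (idx : {ffun 'I_m -> 'I_n}) k c :
  \prod_(i < m) v 0 (tset idx k c i) = v 0 c * \prod_(i < m | i != k) v 0 (idx i).
Proof.
rewrite (bigD1 k) //= tset_at; congr (_ * _); apply: eq_bigr => i ik.
by rewrite tset_ne.
Qed.


Lemma gam_eq m g (T : tfield R n m) (x v : pt) :
  \sum_(idx : {ffun 'I_m -> 'I_n}) \sum_(b < n) (\sum_(k < m) \sum_(c < n) christoffel g c b (idx k) x * T (tset idx k c) x)
     * (\prod_(i < m) v 0 (idx i) * v 0 b)
  = \sum_(idx : {ffun 'I_m -> 'I_n}) T idx x * \sum_(k < m) (\sum_(b < n) \sum_(c < n) christoffel g (idx k) b c x * v 0 b * v 0 c)
     * \prod_(i < m | i != k) v 0 (idx i).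
Proof.
have L : forall idx : {ffun 'I_m -> 'I_n}, \sum_(b < n) (\sum_(k < m) \sum_(c < n) christoffel g c b (idx k) x * T (tset idx k c) x)
     * (\prod_(i < m) v 0 (idx i) * v 0 b) =
   \sum_(k < m) \sum_(c < n) \sum_(b < n) christoffel g c b (idx k) x * T (tset idx k c) x
     * (\prod_(i < m) v 0 (idx i) * v 0 b).
  move=> idx; under eq_bigr do rewrite big_distrl /=.
  rewrite exchange_big /=; apply: eq_bigr => k _.
  under eq_bigr do rewrite big_distrl /=.
  by rewrite exchange_big.
under eq_bigr do rewrite L.
rewrite exchange_big /=.
have Rr : forall idx : {ffun 'I_m -> 'I_n}, T idx x * \sum_(k < m) (\sum_(b < n) \sum_(c < n) christoffel g (idx k) b c x * v 0 b * v 0 c)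
     * \prod_(i < m | i != k) v 0 (idx i) =
   \sum_(k < m) \sum_(c < n) \sum_(b < n) T idx x * (christoffel g (idx k) b c x * v 0 b * v 0 c
     * \prod_(i < m | i != k) v 0 (idx i)).
  move=> idx; rewrite big_distrr /=; apply: eq_bigr => k _.
  rewrite big_distrl /= big_distrr /= exchange_big /=; apply: eq_bigr => c _.
  rewrite big_distrl /= big_distrr /=; apply: eq_bigr => b _.
  by [].
under [RHS]eq_bigr do rewrite Rr.
rewrite [RHS]exchange_big /=; apply: eq_bigr => k _.
rewrite (sum_tset k); apply: eq_bigr => idx _; apply: eq_bigr => c _.
apply: eq_bigr => b _.
rewrite tset_at tset_tset prod_tset; ring.
Qed.


Definition QT m (T : tfield R n m) (x v Qx : pt) : R :=
  \sum_(idx : {ffun 'I_m -> 'I_n}) T idx x *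
     \sum_(k < m) Qx 0 (idx k) * \prod_(i < m | i != k) v 0 (idx i).

Lemma dcontr_eq m g (T : tfield R n m) (x v acc Qx : pt) :
  (forall a, acc 0 a = - (\sum_(b < n) \sum_(c < n) christoffel g a b c x * v 0 b * v 0 c) - Qx 0 a) ->
  \sum_(idx : {ffun 'I_m -> 'I_n}) ((\sum_(b < n) pd b (T idx) x * v 0 b) * \prod_(i < m) v 0 (idx i)
     + T idx x * \sum_(k < m) acc 0 (idx k) * \prod_(i < m | i != k) v 0 (idx i))
  = contr (covd g T) x v - QT T x v Qx.
Proof.
move=> Hacc.
rewrite /contr sum_ext /QT.
under [X in X - _]eq_bigr => idx _.
  under eq_bigr => b _ do rewrite prod_ext /covd tinit_ext tlast_ext mulrBl.
  rewrite sumrB.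
  over.
rewrite sumrB gam_eq.
rewrite -!sumrB; apply: eq_bigr => idx _.
under [X in T idx x * X]eq_bigr => k _ do rewrite Hacc mulrBl mulNr.
rewrite sumrB sumrN mulrBr mulrN big_distrl /=.
set A := \sum_(b < n) _; set B := \sum_(b < n) _.
have -> : A = B by apply: eq_bigr => b _; rewrite /= mulrCA mulrC mulrA.
ring.
Qed.


Lemma dsum (I : finType) (F : I -> pt -> R) x :
  (forall i, differentiable (F i) x) -> differentiable (fun y => \sum_i F i y) x.
Proof.
move=> H; rewrite -fct_sumE.
by elim/big_ind : _ => [|f1 f2 d1 d2|i _]; [exact: differentiable_cst|exact: differentiableD|exact: H].
Qed.

Lemma dprod (I : finType) (F : I -> pt -> R) x :
  (forall i, differentiable (F i) x) -> differentiable (fun y => \prod_i F i y) x.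
Proof.
move=> H; rewrite -fct_prodE.
by elim/big_ind : _ => [|f1 f2 d1 d2|i _]; [exact: differentiable_cst|exact: differentiableM|exact: H].
Qed.

Lemma dmulc (c : R) (f : pt -> R) x : differentiable f x -> differentiable (fun y => c * f y) x.
Proof.
move=> df; have -> : (fun y => c * f y) = cst c * f by [].
exact: differentiableM.
Qed.

Lemma dmul (f h : pt -> R) x : differentiable f x -> differentiable h x ->
  differentiable (fun y => f y * h y) x.
Proof. move=> df dh; exact: (differentiableM df dh). Qed.

Lemma dadd (f h : pt -> R) x : differentiable f x -> differentiable h x ->
  differentiable (fun y => f y + h y) x.
Proof. move=> df dh; exact: (differentiableD df dh). Qed.

Lemma dsub (f h : pt -> R) x : differentiable f x -> differentiable h x ->
  differentiable (fun y => f y - h y) x.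
Proof. move=> df dh; exact: (differentiableB df dh). Qed.

Lemma ddet k (M : pt -> 'M[R]_k) x :
  (forall i j, differentiable (fun y => M y i j) x) -> differentiable (fun y => \det (M y)) x.
Proof.
move=> H; rewrite /determinant; apply: dsum => s; apply: dmulc; apply: dprod => i.
exact: H.
Qed.

Lemma dadj k (M : pt -> 'M[R]_k) x i j :
  (forall i j, differentiable (fun y => M y i j) x) -> differentiable (fun y => \adj (M y) i j) x.
Proof.
move=> H; under eq_fun do rewrite mxE /cofactor.
apply: dmulc; apply: ddet => i' j'; under eq_fun do rewrite !mxE.
exact: H.
Qed.


Lemma smooth_diff (U : set pt) f x : smooth_on U f -> U x -> differentiable f x.
Proof. by move=> H Ux; exact: (H [::] x Ux). Qed.

Lemma smooth_pd (U : set pt) f b x : smooth_on U f -> U x -> differentiable (pd b f) x.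
Proof. by move=> H Ux; exact: (H [:: b] x Ux). Qed.

Lemma christoffel_diff (U : set pt) g a b c x :
  open U -> metric_on U g -> U x -> differentiable (christoffel g a b c) x.
Proof.
move=> oU [gs gu] Ux.
pose h := fun y => 2^-1 * \sum_(d < n) ((\det (g y))^-1 * \adj (g y) a d) *
    (pd b (fun z => g z d c) y + pd c (fun z => g z d b) y - pd d (fun z => g z b c) y).
apply: (@diff_near _ _ _ _ h).
  have : \forall y \near x, U y by apply: open_nbhs_nbhs; split.
  apply: filterS => y Uy; rewrite /christoffel /h /invmx.
  have [_ ->] := gu y Uy.
  by congr (_ * _); apply: eq_bigr => d _; rewrite mxE.
have dg : forall i j, differentiable (fun y => g y i j) x.
  by move=> i j; apply: smooth_diff (gs i j) Ux.
apply: dmulc; apply: dsum => d; apply: dmul; last first.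
  by apply: dsub; [apply: dadd|]; apply: smooth_pd.
apply: dmul; last exact: dadj.
apply: differentiableV; first exact: ddet.
by have [_ ] := gu x Ux; rewrite unitmxE unitfE.
Qed.


Lemma covd_diff m (T : tfield R n m) (U : set pt) g idx x :
  open U -> metric_on U g -> tsmooth U T -> U x -> differentiable (covd g T idx) x.
Proof.
move=> oU mg sT Ux; rewrite /covd; apply: dsub; first exact: smooth_pd (sT _) Ux.
apply: dsum => k; apply: dsum => c; apply: dmul; first exact: (christoffel_diff _ _ _ oU mg Ux).
exact: smooth_diff (sT _) Ux.
Qed.

Lemma symz_diff m (T : tfield R n m) idx x :
  (forall idx, differentiable (T idx) x) -> differentiable (symz T idx) x.
Proof. by move=> H; rewrite /symz; apply: dmulc; apply: dsum => s; apply: H. Qed.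

Lemma tperm_inv m (idx : {ffun 'I_m -> 'I_n}) (s : 'S_m) : Defs.tperm (Defs.tperm idx (s^-1)%g) s = idx.
Proof. by apply/ffunP => i; rewrite /Defs.tperm !ffunE permK. Qed.

Lemma contr_symz m (T : tfield R n m) x v : contr (symz T) x v = contr T x v.
Proof.
rewrite /contr /symz.
under eq_bigr do rewrite -mulrA big_distrl /=.
rewrite -big_distrr /= exchange_big /=.
have E : forall s : 'S_m, \sum_(idx : {ffun 'I_m -> 'I_n}) T (Defs.tperm idx s) x * \prod_(i < m) v 0 (idx i)
   = \sum_(idx : {ffun 'I_m -> 'I_n}) T idx x * \prod_(i < m) v 0 (idx i).
  move=> s.
  have can1 : cancel (fun idx : {ffun 'I_m -> 'I_n} => Defs.tperm idx (s^-1)%g) (fun idx => Defs.tperm idx s).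
    by move=> idx; exact: tperm_inv.
  rewrite (reindex_inj (can_inj can1)) /=.
  apply: eq_bigr => idx _; rewrite tperm_inv; congr (_ * _).
  rewrite [RHS](reindex_inj (@perm_inj _ (s^-1)%g)) /=.
  by apply: eq_bigr => i _; rewrite /Defs.tperm ffunE.
under eq_bigr do rewrite E.
rewrite sumr_const card_Sn -mulr_natl.
have H : (m`!%:R : R) != 0 by rewrite pnatr_eq0 -lt0n fact_gt0.
by field.
Qed.


Lemma QT_sym m (T : tfield R n m.+1) x v Qx :
  (forall idx s, T (Defs.tperm idx s) x = T idx x) ->
  QT T x v Qx = m.+1%:R * \sum_(idx : {ffun 'I_m -> 'I_n}) \sum_(c < n)
      T (ext idx c) x * Qx 0 c * \prod_(i < m) v 0 (idx i).
Proof.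
move=> Tsym; rewrite /QT.
under eq_bigr do rewrite big_distrr /=.
rewrite exchange_big /=.
have Hk : forall k : 'I_m.+1,
  \sum_(idx : {ffun 'I_m.+1 -> 'I_n}) T idx x * (Qx 0 (idx k) * \prod_(i < m.+1 | i != k) v 0 (idx i)) =
  \sum_(idx : {ffun 'I_m.+1 -> 'I_n}) T idx x * (Qx 0 (idx ord_max) * \prod_(i < m.+1 | i != ord_max) v 0 (idx i)).
  move=> k; pose s := tperm k (@ord_max m).
  have can1 : cancel (fun idx : {ffun 'I_m.+1 -> 'I_n} => Defs.tperm idx s) (fun idx => Defs.tperm idx s).
    by move=> idx; apply/ffunP => i; rewrite /Defs.tperm !ffunE tpermK.
  rewrite (reindex_inj (can_inj can1)) /=.
  apply: eq_bigr => idx _; rewrite Tsym; congr (_ * (_ * _)).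
    by rewrite /Defs.tperm ffunE /s tpermL.
  rewrite [RHS](reindex_inj (@perm_inj _ s)) /=.
  apply: eq_big => [i|i _]; last by rewrite /Defs.tperm ffunE.
  by rewrite -{1}(tpermL k (@ord_max m)) -/s (inj_eq (@perm_inj _ s)).
under eq_bigr do rewrite Hk.
rewrite sumr_const card_ord -[X in X = _]mulr_natl; congr (_ * _).
rewrite sum_ext; apply: eq_bigr => idx _; apply: eq_bigr => c _.
rewrite ext_max prod_excl_max mulrA; congr (_ * _); apply: eq_bigr => i _; exact: (congr1 _ (ext_widen _ _ _)).
Qed.


Lemma ext_lift m idx b (j : 'I_m) : ext idx b (lift ord_max j) = idx j.
Proof. by rewrite /ext ffunE liftK. Qed.

Lemma val_lift_max m (j : 'I_m) : val (lift ord_max j) = val j.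
Proof. by rewrite /= /bump leqNgt ltn_ord add0n. Qed.

Lemma ext_ix0 (idx : {ffun 'I_0 -> 'I_n}) b : ext idx b = ix1 b.
Proof.
apply/ffunP => i; case: (unliftP ord_max i) => [j ->|->].
  by case: j.
by rewrite ext_max /ix1 ffunE.
Qed.

Lemma ext_ix1 a b : ext (ix1 a) b = ix2 a b.
Proof.
apply/ffunP => i; case: (unliftP ord_max i) => [j ->|->]; last by rewrite ext_max /ix2 ffunE.
rewrite ext_lift /ix1 /ix2 !ffunE val_lift_max.
by case: j => -[|j] Hj.
Qed.

Lemma ext_ix2 a b c : ext (ix2 a b) c = ix3 a b c.
Proof.
apply/ffunP => i; case: (unliftP ord_max i) => [j ->|->]; last by rewrite ext_max /ix3 ffunE.
rewrite ext_lift /ix3 /ix2 !ffunE val_lift_max.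
by case: j => -[|[|j]] Hj.
Qed.

Lemma sum1 (F : {ffun 'I_1 -> 'I_n} -> R) :
  \sum_idx F idx = \sum_(a < n) F (ix1 a).
Proof.
rewrite sum_ext.
under eq_bigr do under eq_bigr do rewrite ext_ix0.
by rewrite sumr_const card_ffun !card_ord expn0 mulr1n.
Qed.

Lemma sum2 (F : {ffun 'I_2 -> 'I_n} -> R) :
  \sum_idx F idx = \sum_(a < n) \sum_(b < n) F (ix2 a b).
Proof.
rewrite sum_ext sum1; apply: eq_bigr => a _; apply: eq_bigr => b _.
by rewrite ext_ix1.
Qed.

Lemma sum3 (F : {ffun 'I_3 -> 'I_n} -> R) :
  \sum_idx F idx = \sum_(a < n) \sum_(b < n) \sum_(c < n) F (ix3 a b c).
Proof.
rewrite sum_ext sum2; apply: eq_bigr => a _; apply: eq_bigr => b _.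
by apply: eq_bigr => c _; rewrite ext_ix2.
Qed.


Lemma contr1 (T : tfield R n 1) x (v : pt) : contr T x v = \sum_(a < n) T (ix1 a) x * v 0 a.
Proof.
rewrite /contr sum1; apply: eq_bigr => a _.
by rewrite big_ord1 /ix1 ffunE.
Qed.

Lemma contr2 (T : tfield R n 2) x (v : pt) :
  contr T x v = \sum_(a < n) \sum_(b < n) T (ix2 a b) x * (v 0 a * v 0 b).
Proof.
rewrite /contr sum2; apply: eq_bigr => a _; apply: eq_bigr => b _.
by rewrite !big_ord_recr big_ord0 /= mul1r /ix2 !ffunE.
Qed.

Lemma contr_deriv m g Q (U : set pt) I q t (T : tfield R n m) :
  is_solution g Q U I q -> I t -> (forall idx, differentiable (T idx) (q t)) ->
  is_derive t (1:R) (fun s => contr T (q s) (derive1 q s))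
    (contr (covd g T) (q t) (derive1 q t) - QT T (q t) (derive1 q t) (Q (q t))).
Proof.
move=> [_ H] It dT; have [Uq dq ddq acc] := H t It.
apply: is_derive_eq (contr_is_derive dq ddq dT) _.
exact: dcontr_eq.
Qed.

Lemma perm1_id (s : 'S_1) : s = 1%g.
Proof. by apply/permP => i; rewrite perm1 !ord1. Qed.

Lemma QT1 (T : tfield R n 1) x v Qx : QT T x v Qx = \sum_(a < n) T (ix1 a) x * Qx 0 a.
Proof.
rewrite QT_sym; last first.
  by move=> idx s; rewrite (perm1_id s); congr (T _ x); apply/ffunP => i; rewrite /Defs.tperm ffunE perm1.
rewrite mul1r.
under eq_bigr do under eq_bigr do rewrite ext_ix0 big_ord0 mulr1.
by rewrite sumr_const card_ffun !card_ord expn0 mulr1n.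
Qed.


Lemma QT2 (T : tfield R n 2) x v Qx : (forall idx s, T (Defs.tperm idx s) x = T idx x) ->
  QT T x v Qx = 2 * \sum_(a < n) (\sum_(c < n) T (ix2 a c) x * Qx 0 c) * v 0 a.
Proof.
move=> Ts; rewrite QT_sym // sum1; congr (_ * _); apply: eq_bigr => a _.
rewrite big_distrl /=; apply: eq_bigr => c _.
by rewrite ext_ix1 big_ord1 /ix1 ffunE.
Qed.

Lemma QT3 (T : tfield R n 3) x v Qx : (forall idx s, T (Defs.tperm idx s) x = T idx x) ->
  QT T x v Qx = 3 * \sum_(a < n) \sum_(b < n) (\sum_(c < n) T (ix3 a b c) x * Qx 0 c) * (v 0 a * v 0 b).
Proof.
move=> Ts; rewrite QT_sym // sum2; congr (_ * _); apply: eq_bigr => a _.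
apply: eq_bigr => b _; rewrite big_distrl /=; apply: eq_bigr => c _.
by rewrite ext_ix2 !big_ord_recr big_ord0 /= mul1r /ix2 !ffunE.
Qed.


Lemma killing_contr0 g (U : set pt) m (C : tfield R n m) x v :
  killing g U C -> U x -> contr (symcov g C) x v = 0.
Proof.
move=> [_ kC] Ux; rewrite /contr big1 // => idx _.
by rewrite /symcov kC // mul0r.
Qed.

Lemma symcov_diff g (U : set pt) m (T : tfield R n m) idx x :
  open U -> metric_on U g -> tsmooth U T -> U x -> differentiable (symcov g T idx) x.
Proof.
by move=> oU mg sT Ux; apply: symz_diff => idx'; exact: (covd_diff _ oU mg sT Ux).
Qed.

Lemma sol_U g Q (U : set pt) I q t : is_solution g Q U I q -> I t -> U (q t).
Proof. by move=> [_ H] It; have [] := H t It. Qed.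

Lemma d_one g Q (U : set pt) I q t (L : tfield R n 1) :
  is_solution g Q U I q -> I t -> tsmooth U L ->
  is_derive t (1:R) (fun s => contr L (q s) (derive1 q s))
    (contr (symcov g L) (q t) (derive1 q t) - c1 L Q (q t)).
Proof.
move=> sol It sL; have Uq := sol_U sol It.
apply: is_derive_eq (contr_deriv sol It (fun idx => smooth_diff (sL idx) Uq)) _.
by rewrite /symcov contr_symz QT1.
Qed.

Lemma d_two g Q (U : set pt) I q t (L : tfield R n 2) :
  is_solution g Q U I q -> I t -> tsmooth U L -> tsymmetric U L ->
  is_derive t (1:R) (fun s => contr L (q s) (derive1 q s))
    (contr (symcov g L) (q t) (derive1 q t) -
       2 * \sum_(a < n) c2 L a Q (q t) * derive1 q t 0 a).
Proof.
move=> sol It sL syL; have Uq := sol_U sol It.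
apply: is_derive_eq (contr_deriv sol It (fun idx => smooth_diff (sL idx) Uq)) _.
by rewrite /symcov contr_symz QT2 // => idx s; apply: syL.
Qed.

Lemma d_three g Q (U : set pt) I q t (C : tfield R n 3) :
  is_solution g Q U I q -> I t -> killing g U C ->
  (forall idx, differentiable (C idx) (q t)) ->
  is_derive t (1:R) (fun s => contr C (q s) (derive1 q s))
    (- (3 * \sum_(a < n) \sum_(b < n) c3 C a b Q (q t) * (derive1 q t 0 a * derive1 q t 0 b))).
Proof.
move=> sol It kC dC; have Uq := sol_U sol It.
apply: is_derive_eq (contr_deriv sol It dC) _.
rewrite -contr_symz -/(symcov g C) (killing_contr0 _ kC Uq) sub0r QT3 //.
by move=> idx s; case: kC => syC _; apply: syC.
Qed.

Lemma d_scalar (Q : pt -> pt) g (U : set pt) I q t (f : pt -> R) :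
  is_solution g Q U I q -> I t -> differentiable f (q t) ->
  is_derive t (1:R) (fun s => f (q s)) (\sum_(a < n) pd a f (q t) * derive1 q t 0 a).
Proof.
move=> [_ H] It df; have [_ dq _ _] := H t It.
exact: chain_is_derive.
Qed.


End Aux.

Section Calc.
Context (R : realType).

Lemma dM (f h : R -> R) t df dh : is_derive t (1:R) f df -> is_derive t (1:R) h dh ->
  is_derive t (1:R) (fun s => f s * h s) (f t * dh + h t * df).
Proof. by move=> Hf Hh; have := is_deriveM Hf Hh. Qed.

Lemma dD (f h : R -> R) t df dh : is_derive t (1:R) f df -> is_derive t (1:R) h dh ->
  is_derive t (1:R) (fun s => f s + h s) (df + dh).
Proof. by move=> Hf Hh; have := is_deriveD Hf Hh. Qed.

Lemma dB (f h : R -> R) t df dh : is_derive t (1:R) f df -> is_derive t (1:R) h dh ->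
  is_derive t (1:R) (fun s => f s - h s) (df - dh).
Proof. by move=> Hf Hh; have := is_deriveB Hf Hh. Qed.

Lemma dN (f : R -> R) t df : is_derive t (1:R) f df ->
  is_derive t (1:R) (fun s => - f s) (- df).
Proof. by move=> Hf; have := is_deriveN Hf. Qed.

Lemma dC (c : R) (f : R -> R) t df : is_derive t (1:R) f df ->
  is_derive t (1:R) (fun s => c * f s) (c * df).
Proof. by move=> Hf; have := is_deriveZ c Hf. Qed.

Lemma dcst (c : R) t : is_derive t (1:R) (fun _ : R => c) 0.
Proof. exact: is_derive_cst. Qed.

Lemma dpow (k : nat) t : is_derive t (1:R) (fun s : R => s ^+ k) (k%:R * t ^+ k.-1).
Proof.
elim: k => [|k IH].
  by rewrite mul0r; under eq_fun do rewrite expr0; exact: dcst.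
have := dM (is_derive_id t (1:R)) IH.
under eq_fun do rewrite -exprS.
move=> H; apply: is_derive_eq H _.
case: k IH => [|k] _; first by rewrite /= mul0r mulr0 add0r !expr0 mulr1.
rewrite /= exprS -[k.+2%:R]natr1; ring.
Qed.

Lemma dcomp (f g : R -> R) t df dg : is_derive t (1:R) f df -> is_derive (f t) (1:R) g dg ->
  is_derive t (1:R) (fun s => g (f s)) (dg * df).
Proof.
move=> Hf Hg; have df' : differentiable f t by apply/derivable1_diffP.
have dg' : differentiable g (f t) by apply/derivable1_diffP.
apply: DeriveDef; first by apply/derivable1_diffP; exact: differentiable_comp.
rewrite -derive1E -[fun s => g (f s)]/(g \o f) (derive1_comp (f := f) (g := g)) //.
by rewrite !derive1E !derive_val.
Qed.

Lemma dexp (lam t : R) : is_derive t (1:R) (fun s => expR (lam * s)) (expR (lam * t) * lam).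
Proof.
apply: dcomp (is_derive_expR _).
have := dC lam (is_derive_id t (1:R)).
by rewrite mulr1.
Qed.


Lemma natsum_is_derive N (h : nat -> R -> R) (dh : nat -> R) t :
  (forall j, (j < N)%N -> is_derive t (1:R) (h j) (dh j)) ->
  is_derive t (1:R) (fun s => \sum_(0 <= j < N) h j s) (\sum_(0 <= j < N) dh j).
Proof.
move=> H; under eq_fun do rewrite big_mkord; rewrite big_mkord.
by apply: bigsum_is_derive => i; apply: H.
Qed.

Lemma dterm (e : nat) (c : R) (F : R -> R) t dF : is_derive t (1:R) F dF ->
  is_derive t (1:R) (fun s => s ^+ e * c * F s) (e%:R * t ^+ e.-1 * c * F t + t ^+ e * c * dF).
Proof.
move=> HF.
have H1 : is_derive t (1:R) (fun s => s ^+ e * c) (e%:R * t ^+ e.-1 * c).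
  have -> : (fun s => s ^+ e * c) = (fun s => c * s ^+ e) by apply/funext => s; rewrite mulrC.
  by apply: is_derive_eq (dC c (dpow e t)) _; rewrite mulrC.
by apply: is_derive_eq (dM H1 HF) _; rewrite addrC mulrC.
Qed.

Lemma dterm0 (e : nat) (F : R -> R) t dF : is_derive t (1:R) F dF ->
  is_derive t (1:R) (fun s => s ^+ e * F s) (e%:R * t ^+ e.-1 * F t + t ^+ e * dF).
Proof.
move=> HF; have := dterm e 1 HF.
have -> : (fun s => s ^+ e * 1 * F s) = (fun s => s ^+ e * F s) by apply/funext => s; rewrite mulr1.
by rewrite !mulr1.
Qed.

End Calc.
Section CFI.
Context (R : realType) (n : nat).
Local Notation pt := 'rV[R]_n.

Lemma c1_diff (U : set pt) (L : tfield R n 1) (Q : pt -> pt) x :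
  tsmooth U L -> (forall a, smooth_on U (fun x => Q x 0 a)) -> U x ->
  differentiable (c1 L Q) x.
Proof.
move=> sL sQ Ux; rewrite /c1; apply: dsum => c; apply: dmul.
  exact: smooth_diff (sL _) Ux.
exact: smooth_diff (sQ c) Ux.
Qed.

Lemma fi_of_derive g Q (U : set pt) (J : R -> pt -> pt -> R) :
  (forall I q t, is_solution g Q U I q -> I t ->
     is_derive t (1:R) (fun s => J s (q s) (derive1 q s)) 0) ->
  first_integral g Q U J.
Proof.
move=> H I q sol t It; have D := H I q t sol It; split; first exact: ex_derive.
by rewrite derive1E derive_val.
Qed.

Lemma lin2 (X Y : 'I_n -> 'I_n -> R) (w : 'I_n -> 'I_n -> R) c1' c2' :
  \sum_(a < n) \sum_(b < n) (c1' * X a b - c2' * Y a b) * w a b =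
  c1' * \sum_(a < n) \sum_(b < n) X a b * w a b - c2' * \sum_(a < n) \sum_(b < n) Y a b * w a b.
Proof.
rewrite !big_distrr -sumrB; apply: eq_bigr => a _.
rewrite !big_distrr -sumrB; apply: eq_bigr => b _ /=; ring.
Qed.

Lemma lin1 (X Y : 'I_n -> R) (w : 'I_n -> R) c1' c2' :
  \sum_(a < n) (c1' * X a - c2' * Y a) * w a =
  c1' * \sum_(a < n) X a * w a - c2' * \sum_(a < n) Y a * w a.
Proof. rewrite !big_distrr -sumrB; apply: eq_bigr => a _ /=; ring. Qed.

Lemma sum_sym_eq (T C : tfield R n 3) (L : tfield R n 2) (W : tfield R n 2) (Q : pt -> pt) x (v : pt) al be :
  (forall a b, W (ix2 a b) x = al * c3 C a b Q x - be * L (ix2 a b) x) ->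
  contr W x v = al * \sum_(a < n) \sum_(b < n) c3 C a b Q x * (v 0 a * v 0 b) - be * contr L x v.
Proof.
move=> H; rewrite !contr2 -lin2; do 2 (apply: eq_bigr => ? _); by rewrite H.
Qed.

Lemma sum_pd_eq (f : pt -> R) (L : tfield R n 2) (L1 : tfield R n 1) (Q : pt -> pt) x (v : pt) al be :
  (forall a, pd a f x = al * c2 L a Q x - be * L1 (ix1 a) x) ->
  \sum_(a < n) pd a f x * v 0 a = al * \sum_(a < n) c2 L a Q x * v 0 a - be * contr L1 x v.
Proof.
move=> H; rewrite contr1 -lin1; apply: eq_bigr => ? _; by rewrite H.
Qed.

Lemma cfi3 (U : set pt) (g : pt -> 'M[R]_n) (Q : pt -> pt) :
  open U -> metric_on U g -> (forall a, smooth_on U (fun x => Q x 0 a)) ->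
  (forall (lam : R) (L2 : tfield R n 2) (L1 : tfield R n 1),
    lam != 0 ->
    tsmooth U L2 -> tsymmetric U L2 -> tsmooth U L1 ->
    killing g U (symcov g L2) ->
    (forall a b x, U x ->
       symcov g L1 (ix2 a b) x =
         - (3 / lam) * c3 (symcov g L2) a b Q x - lam * L2 (ix2 a b) x) ->
    (forall a x, U x ->
       pd a (c1 L1 Q) x = 2 * lam * c2 L2 a Q x - lam ^+ 2 * L1 (ix1 a) x) ->
    first_integral g Q U (fun t x v =>
        expR (lam * t) *
          (- contr (symcov g L2) x v + lam * contr L2 x v
           + lam * contr L1 x v + c1 L1 Q x))).
Proof.
move=> oU mg sQ lam L2 L1 lam0 sL2 syL2 sL1 kC h1 h2.
apply: fi_of_derive => I q t sol It.
have Uq := sol_U sol It.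
have E1 := d_three sol It kC (fun idx => symcov_diff idx oU mg sL2 Uq).
have E2 := d_two sol It sL2 syL2.
have E3 := d_one sol It sL1.
have E4 := d_scalar sol It (c1_diff sL1 sQ Uq).
have := dM (dexp lam t) (dD (dD (dD (dN E1) (dC lam E2)) (dC lam E3)) E4).
move=> H; apply: is_derive_eq H _.
rewrite (@sum_sym_eq (symcov g L2) (symcov g L2) L2 (symcov g L1) Q _ _ (- (3 / lam)) lam); last first.
  by move=> a b; rewrite h1.
rewrite (@sum_pd_eq _ L2 L1 Q _ _ (2 * lam) (lam ^+ 2)); last by move=> a; rewrite h2.
field; exact: lam0.
Qed.


Lemma nat_neq0 (k : nat) : ((k.+1)%:R : R) != 0.
Proof. by rewrite pnatr_eq0. Qed.

Lemma nz1 (k : nat) : (1 + k%:R : R) != 0.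
Proof. by rewrite addrC -[1]/(1%:R) -natrD addn1 pnatr_eq0. Qed.

Lemma nz2 (k : nat) : (2 + k%:R : R) != 0.
Proof. by rewrite addrC -[2]/(2%:R) -natrD addn2 pnatr_eq0. Qed.

Lemma cfi1 (U : set pt) (g : pt -> 'M[R]_n) (Q : pt -> pt) :
  open U -> metric_on U g -> (forall a, smooth_on U (fun x => Q x 0 a)) ->
  (forall (l : nat) (L2 : nat -> tfield R n 2) (L1 : nat -> tfield R n 1)
          (G : 'rV[R]_n -> R),
    (1 <= l)%N ->
    (forall j, (j <= l)%N -> tsmooth U (L2 j.*2) /\ tsymmetric U (L2 j.*2)) ->
    (forall j, (1 <= j <= l)%N -> tsmooth U (L1 j.*2.-1)) ->
    smooth_on U G ->
    (forall j, (j < l)%N -> killing g U (symcov g (L2 j.*2))) ->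
    killing g U (L2 l.*2) ->
    (forall k, (2 <= k <= l.*2)%N -> ~~ odd k -> forall a b x, U x ->
       symcov g (L1 k.-1) (ix2 a b) x =
         - (3 / (k.-1)%:R) * c3 (symcov g (L2 (k - 2)%N)) a b Q x
         - k%:R * L2 k (ix2 a b) x) ->
    (forall a x, U x ->
       pd a (c1 (L1 l.*2.-1) Q) x = 4 * l%:R * c2 (L2 l.*2) a Q x) ->
    (forall k, (3 <= k <= l.*2.-1)%N -> odd k -> forall a x, U x ->
       pd a (c1 (L1 (k - 2)%N) Q) x =
         2 * (k.-1)%:R * c2 (L2 k.-1) a Q x - (k * k.-1)%:R * L1 k (ix1 a) x) ->
    (forall a x, U x -> pd a G x = 2 * c2 (L2 0%N) a Q x - L1 1%N (ix1 a) x) ->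
    first_integral g Q U (fun t x v =>
        - (\sum_(j < l) t ^+ j.*2.+1 / (j.*2.+1)%:R * contr (symcov g (L2 j.*2)) x v)
        + \sum_(j < l.+1) t ^+ j.*2 * contr (L2 j.*2) x v
        + \sum_(1 <= j < l.+1) t ^+ j.*2.-1 * contr (L1 j.*2.-1) x v
        + \sum_(1 <= j < l.+1) t ^+ j.*2 / (j.*2)%:R * c1 (L1 j.*2.-1) Q x
        + G x)).
Proof.
move=> oU mg sQ l L2 L1 G l1 hL2 hL1 sG kL2 kL2l HA HB HC HG.
case: l l1 hL2 hL1 kL2 kL2l HA HB HC => [//|l] _ hL2 hL1 kL2 kL2l HA HB HC.
apply: fi_of_derive => I q t sol It.
have Uq := sol_U sol It.
set v := derive1 q t.
pose A j := t ^+ j.*2 * contr (symcov g (L2 j.*2)) (q t) v.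
pose P3 j := t ^+ j.*2.+1 * ((j.*2.+1)%:R)^-1 *
   (\sum_(a < n) \sum_(b < n) c3 (symcov g (L2 j.*2)) a b Q (q t) * (v 0 a * v 0 b)).
pose Bt j := (j.*2.+2)%:R * t ^+ j.*2.+1 * contr (L2 j.*2.+2) (q t) v.
pose S j := t ^+ j.*2 * \sum_(a < n) c2 (L2 j.*2) a Q (q t) * v 0 a.
pose Ct j := (j.*2.+1)%:R * t ^+ j.*2 * contr (L1 j.*2.+1) (q t) v.
pose Dt j := t ^+ j.*2.+1 * c1 (L1 j.*2.+1) Q (q t).
have sL1 : forall j, (j <= l)%N -> tsmooth U (L1 j.*2.+1).
  by move=> j jl; apply: (hL1 j.+1); lia.
have H1 : is_derive t (1:R)
   (fun s => \sum_(0 <= j < l.+1) s ^+ j.*2.+1 * ((j.*2.+1)%:R)^-1 *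
               contr (symcov g (L2 j.*2)) (q s) (derive1 q s))
   (\sum_(0 <= j < l.+1) A j - 3 * \sum_(0 <= j < l.+1) P3 j).
  have D := @natsum_is_derive _ l.+1
    (fun j s => s ^+ j.*2.+1 * ((j.*2.+1)%:R)^-1 * contr (symcov g (L2 j.*2)) (q s) (derive1 q s))
    (fun j => (j.*2.+1)%:R * t ^+ (j.*2.+1).-1 * ((j.*2.+1)%:R)^-1 * contr (symcov g (L2 j.*2)) (q t) v
       + t ^+ j.*2.+1 * ((j.*2.+1)%:R)^-1 * (- (3 * \sum_(a < n) \sum_(b < n)
           c3 (symcov g (L2 j.*2)) a b Q (q t) * (v 0 a * v 0 b)))) t
    (fun j jl => dterm _ _ (d_three sol It (kL2 j jl)
        (fun idx => symcov_diff idx oU mg (hL2 j (ltnW jl)).1 Uq))).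
  apply: is_derive_eq D _.
  rewrite mulr_sumr -sumrB; apply: eq_bigr => j _; rewrite /A /P3 /=.
  by field; rewrite nz1.
have H2 : is_derive t (1:R)
   (fun s => \sum_(0 <= j < l.+2) s ^+ j.*2 * contr (L2 j.*2) (q s) (derive1 q s))
   (\sum_(0 <= j < l.+1) Bt j + \sum_(0 <= j < l.+1) A j
     - 2 * (S 0%N + \sum_(0 <= j < l) S j.+1 + S l.+1)).
  have D := @natsum_is_derive _ l.+2
    (fun j s => s ^+ j.*2 * contr (L2 j.*2) (q s) (derive1 q s))
    (fun j => (j.*2)%:R * t ^+ (j.*2).-1 * contr (L2 j.*2) (q t) v
       + t ^+ j.*2 * (contr (symcov g (L2 j.*2)) (q t) v
          - 2 * \sum_(a < n) c2 (L2 j.*2) a Q (q t) * v 0 a)) t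
    (fun j jl => dterm0 _ (d_two sol It (hL2 j jl).1 (hL2 j jl).2)).
  apply: is_derive_eq D _.
  have E : forall j, (j.*2)%:R * t ^+ (j.*2).-1 * contr (L2 j.*2) (q t) v
       + t ^+ j.*2 * (contr (symcov g (L2 j.*2)) (q t) v
          - 2 * \sum_(a < n) c2 (L2 j.*2) a Q (q t) * v 0 a) =
     (j.*2)%:R * t ^+ (j.*2).-1 * contr (L2 j.*2) (q t) v + A j - 2 * S j.
    by move=> j; rewrite /A /S; ring.
  under eq_bigr do rewrite E.
  rewrite sumrB big_split /= -mulr_sumr.
  rewrite big_nat_recl // mul0r mul0r add0r.
  have KA : A l.+1 = 0 by rewrite /A (killing_contr0 _ kL2l Uq) mulr0.
  rewrite (big_nat_recr l.+1) //= KA addr0.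
  rewrite (big_nat_recr l.+1) //=.
  by rewrite [X in _ - 2 * (X + _) = _](big_nat_recl l).
have H3 : is_derive t (1:R)
   (fun s => \sum_(0 <= j < l.+1) s ^+ j.*2.+1 * contr (L1 j.*2.+1) (q s) (derive1 q s))
   (Ct 0%N + \sum_(0 <= j < l) Ct j.+1 - 3 * \sum_(0 <= j < l.+1) P3 j
     - \sum_(0 <= j < l.+1) Bt j - \sum_(0 <= j < l.+1) Dt j).
  have D := @natsum_is_derive _ l.+1
    (fun j s => s ^+ j.*2.+1 * contr (L1 j.*2.+1) (q s) (derive1 q s))
    (fun j => (j.*2.+1)%:R * t ^+ (j.*2.+1).-1 * contr (L1 j.*2.+1) (q t) v
       + t ^+ j.*2.+1 * (contr (symcov g (L1 j.*2.+1)) (q t) v - c1 (L1 j.*2.+1) Q (q t))) t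
    (fun j jl => dterm0 _ (d_one sol It (sL1 j jl))).
  apply: is_derive_eq D _.
  rewrite (@eq_big_nat _ _ _ 0 l.+1 _ (fun j => Ct j - 3 * P3 j - Bt j - Dt j)); last first.
    move=> j /andP[_ jl].
    have e2 : (j.*2.+2 - 2 = j.*2)%N by lia.
    have HAj := HA j.*2.+2.
    rewrite e2 in HAj.
    rewrite (@sum_sym_eq (symcov g (L2 j.*2)) (symcov g (L2 j.*2)) (L2 j.*2.+2)
       (symcov g (L1 j.*2.+1)) Q (q t) v (- (3 / (j.*2.+1)%:R)) (j.*2.+2)%:R); last first.
      move=> a b; rewrite HAj //.
        by lia.
      by rewrite /= odd_double.
    rewrite /Ct /P3 /Bt /Dt /=.
    by field; rewrite nz1.
  rewrite !sumrB -mulr_sumr (big_nat_recl l) //.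
have H4 : is_derive t (1:R)
   (fun s => \sum_(0 <= j < l.+1) s ^+ j.*2.+2 * ((j.*2.+2)%:R)^-1 * c1 (L1 j.*2.+1) Q (q s))
   (\sum_(0 <= j < l.+1) Dt j + (2 * \sum_(0 <= j < l) S j.+1 - \sum_(0 <= j < l) Ct j.+1)
     + 2 * S l.+1).
  pose W j := t ^+ j.*2.+2 * ((j.*2.+2)%:R)^-1 *
     \sum_(a < n) pd a (c1 (L1 j.*2.+1) Q) (q t) * v 0 a.
  have D := @natsum_is_derive _ l.+1
    (fun j s => s ^+ j.*2.+2 * ((j.*2.+2)%:R)^-1 * c1 (L1 j.*2.+1) Q (q s))
    (fun j => (j.*2.+2)%:R * t ^+ (j.*2.+2).-1 * ((j.*2.+2)%:R)^-1 * c1 (L1 j.*2.+1) Q (q t)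
       + W j) t
    (fun j jl => dterm _ _ (d_scalar sol It (c1_diff (sL1 j jl) sQ Uq))).
  apply: is_derive_eq D _.
  rewrite (@eq_big_nat _ _ _ 0 l.+1 _ (fun j => Dt j + W j)); last first.
    move=> j _; rewrite /Dt /=; congr (_ + _); by field; rewrite nz2.
  rewrite big_split /= [X in _ + X = _](big_nat_recr l) //=.
  have WL : W l = 2 * S l.+1.
    rewrite /W (@sum_pd_eq _ (L2 l.+1.*2) (L1 l.*2.+1) Q (q t) v (4 * l.+1%:R) 0); last first.
      by move=> a; rewrite (HB a (q t) Uq) mul0r subr0.
    have -> : ((l.*2.+2)%:R : R) = 2 * l.+1%:R by rewrite -[l.*2.+2]/((l.+1).*2) -muln2 natrM mulrC.
    by rewrite /S /=; field; rewrite nz1.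
  rewrite WL.
  rewrite (@eq_big_nat _ _ _ 0 l W (fun j => 2 * S j.+1 - Ct j.+1)); last first.
    move=> j /andP[_ jl].
    have e3 : (j.*2.+3 - 2 = j.*2.+1)%N by lia.
    have HCj := HC j.*2.+3.
    rewrite e3 in HCj.
    rewrite /W (@sum_pd_eq _ (L2 j.*2.+2) (L1 j.*2.+3) Q (q t) v (2 * (j.*2.+2)%:R)
       ((j.*2.+3 * j.*2.+2)%:R)); last first.
      move=> a; rewrite HCj //.
        by lia.
      by rewrite /= odd_double.
    rewrite /S /Ct /= natrM.
    by rewrite !doubleS; field; rewrite nz2.
  by rewrite sumrB -mulr_sumr; ring.
have H5 : is_derive t (1:R) (fun s => G (q s)) (2 * S 0%N - Ct 0%N).
  apply: is_derive_eq (d_scalar sol It (smooth_diff sG Uq)) _.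
  rewrite (@sum_pd_eq _ (L2 0%N) (L1 1%N) Q _ _ 2 1); last by move=> a; rewrite HG // mul1r.
  by rewrite /S /Ct /= expr0 !mul1r.
have := dD (dD (dD (dD (dN H1) H2) H3) H4) H5.
have -> : (fun s => - (\sum_(0 <= j < l.+1) s ^+ j.*2.+1 * ((j.*2.+1)%:R)^-1 *
               contr (symcov g (L2 j.*2)) (q s) (derive1 q s)) +
   \sum_(0 <= j < l.+2) s ^+ j.*2 * contr (L2 j.*2) (q s) (derive1 q s) +
   \sum_(0 <= j < l.+1) s ^+ j.*2.+1 * contr (L1 j.*2.+1) (q s) (derive1 q s) +
   \sum_(0 <= j < l.+1) s ^+ j.*2.+2 * ((j.*2.+2)%:R)^-1 * c1 (L1 j.*2.+1) Q (q s) +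
   G (q s)) =
  (fun s => - (\sum_(j < l.+1) s ^+ j.*2.+1 / (j.*2.+1)%:R * contr (symcov g (L2 j.*2)) (q s) (derive1 q s))
        + \sum_(j < l.+2) s ^+ j.*2 * contr (L2 j.*2) (q s) (derive1 q s)
        + \sum_(1 <= j < l.+2) s ^+ j.*2.-1 * contr (L1 j.*2.-1) (q s) (derive1 q s)
        + \sum_(1 <= j < l.+2) s ^+ j.*2 / (j.*2)%:R * c1 (L1 j.*2.-1) Q (q s)
        + G (q s)).
  apply/funext => s; rewrite !big_mkord big_add1 big_add1 /= !big_mkord.
  reflexivity.
move=> H; apply: is_derive_eq H _; ring.
Qed.

Lemma cfi2 (U : set pt) (g : pt -> 'M[R]_n) (Q : pt -> pt) :
  open U -> metric_on U g -> (forall a, smooth_on U (fun x => Q x 0 a)) ->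
  (forall (l : nat) (L3 : tfield R n 3) (L2 : nat -> tfield R n 2)
          (L1 : nat -> tfield R n 1),
    tsmooth U L3 -> killing g U L3 ->
    (forall j, (j <= l)%N -> tsmooth U (L2 j.*2.+1) /\ tsymmetric U (L2 j.*2.+1)) ->
    (forall j, (j <= l)%N -> tsmooth U (L1 j.*2)) ->
    (forall j, (j < l)%N -> killing g U (symcov g (L2 j.*2.+1))) ->
    killing g U (L2 l.*2.+1) ->
    (forall a b x, U x ->
       symcov g (L1 0%N) (ix2 a b) x = 3 * c3 L3 a b Q x - L2 1%N (ix2 a b) x) ->
    (forall k, (3 <= k <= l.*2.+1)%N -> odd k -> forall a b x, U x ->
       symcov g (L1 k.-1) (ix2 a b) x =
         - (3 / (k.-1)%:R) * c3 (symcov g (L2 (k - 2)%N)) a b Q x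
         - k%:R * L2 k (ix2 a b) x) ->
    (forall a x, U x ->
       pd a (c1 (L1 l.*2) Q) x = 2 * (l.*2.+1)%:R * c2 (L2 l.*2.+1) a Q x) ->
    (forall k, (2 <= k <= l.*2)%N -> ~~ odd k -> forall a x, U x ->
       pd a (c1 (L1 (k - 2)%N) Q) x =
         2 * (k.-1)%:R * c2 (L2 k.-1) a Q x - (k * k.-1)%:R * L1 k (ix1 a) x) ->
    first_integral g Q U (fun t x v =>
        (contr L3 x v
         - \sum_(1 <= j < l.+1) t ^+ j.*2 / (j.*2)%:R * contr (symcov g (L2 j.*2.-1)) x v)
        + \sum_(j < l.+1) t ^+ j.*2.+1 * contr (L2 j.*2.+1) x v
        + \sum_(j < l.+1) t ^+ j.*2 * contr (L1 j.*2) x v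
        + \sum_(j < l.+1) t ^+ j.*2.+1 / (j.*2.+1)%:R * c1 (L1 j.*2) Q x)).
Proof.
move=> oU mg sQ l L3 L2 L1 sL3 kL3 hL2 sL1 kL2 kL2l H0 HA HB HC.
apply: fi_of_derive => I q t sol It.
have Uq := sol_U sol It.
set v := derive1 q t.
pose Z := \sum_(a < n) \sum_(b < n) c3 L3 a b Q (q t) * (v 0 a * v 0 b).
pose A j := t ^+ j.*2.+1 * contr (symcov g (L2 j.*2.+1)) (q t) v.
pose P3 j := t ^+ j.*2.+2 * ((j.*2.+2)%:R)^-1 *
   (\sum_(a < n) \sum_(b < n) c3 (symcov g (L2 j.*2.+1)) a b Q (q t) * (v 0 a * v 0 b)).
pose Bt j := (j.*2.+1)%:R * t ^+ j.*2 * contr (L2 j.*2.+1) (q t) v.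
pose S j := t ^+ j.*2.+1 * \sum_(a < n) c2 (L2 j.*2.+1) a Q (q t) * v 0 a.
pose Ct j := (j.*2.+2)%:R * t ^+ j.*2.+1 * contr (L1 j.*2.+2) (q t) v.
pose Dt j := t ^+ j.*2 * c1 (L1 j.*2) Q (q t).
have G0 : is_derive t (1:R) (fun s => contr L3 (q s) (derive1 q s)) (- (3 * Z)).
  exact: d_three sol It kL3 (fun idx => smooth_diff (sL3 idx) Uq).
have H1 : is_derive t (1:R)
   (fun s => \sum_(0 <= j < l) s ^+ j.*2.+2 * ((j.*2.+2)%:R)^-1 *
               contr (symcov g (L2 j.*2.+1)) (q s) (derive1 q s))
   (\sum_(0 <= j < l) A j - 3 * \sum_(0 <= j < l) P3 j).
  have D := @natsum_is_derive _ l
    (fun j s => s ^+ j.*2.+2 * ((j.*2.+2)%:R)^-1 * contr (symcov g (L2 j.*2.+1)) (q s) (derive1 q s))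
    (fun j => (j.*2.+2)%:R * t ^+ (j.*2.+2).-1 * ((j.*2.+2)%:R)^-1 * contr (symcov g (L2 j.*2.+1)) (q t) v
       + t ^+ j.*2.+2 * ((j.*2.+2)%:R)^-1 * (- (3 * \sum_(a < n) \sum_(b < n)
           c3 (symcov g (L2 j.*2.+1)) a b Q (q t) * (v 0 a * v 0 b)))) t
    (fun j jl => dterm _ _ (d_three sol It (kL2 j jl)
        (fun idx => symcov_diff idx oU mg (hL2 j (ltnW jl)).1 Uq))).
  apply: is_derive_eq D _.
  rewrite mulr_sumr -sumrB; apply: eq_bigr => j _; rewrite /A /P3 /=.
  by field; rewrite nz2.
have H2 : is_derive t (1:R)
   (fun s => \sum_(0 <= j < l.+1) s ^+ j.*2.+1 * contr (L2 j.*2.+1) (q s) (derive1 q s))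
   ((Bt 0%N + \sum_(0 <= j < l) Bt j.+1) + \sum_(0 <= j < l) A j
     - 2 * (\sum_(0 <= j < l) S j + S l)).
  have D := @natsum_is_derive _ l.+1
    (fun j s => s ^+ j.*2.+1 * contr (L2 j.*2.+1) (q s) (derive1 q s))
    (fun j => (j.*2.+1)%:R * t ^+ (j.*2.+1).-1 * contr (L2 j.*2.+1) (q t) v
       + t ^+ j.*2.+1 * (contr (symcov g (L2 j.*2.+1)) (q t) v
          - 2 * \sum_(a < n) c2 (L2 j.*2.+1) a Q (q t) * v 0 a)) t
    (fun j jl => dterm0 _ (d_two sol It (hL2 j jl).1 (hL2 j jl).2)).
  apply: is_derive_eq D _.
  have E : forall j, (j.*2.+1)%:R * t ^+ (j.*2.+1).-1 * contr (L2 j.*2.+1) (q t) v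
       + t ^+ j.*2.+1 * (contr (symcov g (L2 j.*2.+1)) (q t) v
          - 2 * \sum_(a < n) c2 (L2 j.*2.+1) a Q (q t) * v 0 a) =
     Bt j + A j - 2 * S j.
    by move=> j; rewrite /A /S /Bt /=; ring.
  under eq_bigr do rewrite E.
  rewrite sumrB big_split /= -mulr_sumr.
  have KA : A l = 0 by rewrite /A (killing_contr0 _ kL2l Uq) mulr0.
  rewrite [X in X + _ - _ = _](big_nat_recl l) //.
  rewrite [X in _ + X - _ = _](big_nat_recr l) //= KA addr0.
  by rewrite [X in _ - 2 * X = _](big_nat_recr l).
have H3 : is_derive t (1:R)
   (fun s => \sum_(0 <= j < l.+1) s ^+ j.*2 * contr (L1 j.*2) (q s) (derive1 q s))
   (3 * Z - Bt 0%N - Dt 0%N + (\sum_(0 <= j < l) Ct j - 3 * \sum_(0 <= j < l) P3 j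
     - \sum_(0 <= j < l) Bt j.+1 - \sum_(0 <= j < l) Dt j.+1)).
  have D := @natsum_is_derive _ l.+1
    (fun j s => s ^+ j.*2 * contr (L1 j.*2) (q s) (derive1 q s))
    (fun j => (j.*2)%:R * t ^+ (j.*2).-1 * contr (L1 j.*2) (q t) v
       + t ^+ j.*2 * (contr (symcov g (L1 j.*2)) (q t) v - c1 (L1 j.*2) Q (q t))) t
    (fun j jl => dterm0 _ (d_one sol It (sL1 j jl))).
  apply: is_derive_eq D _.
  rewrite (big_nat_recl l) //.
  rewrite (@eq_big_nat _ _ _ 0 l _ (fun j => Ct j - 3 * P3 j - Bt j.+1 - Dt j.+1)); last first.
    move=> j /andP[_ jl].
    have e2 : (j.*2.+3 - 2 = j.*2.+1)%N by lia.
    have HAj := HA j.*2.+3.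
    rewrite e2 in HAj.
    rewrite !doubleS.
    rewrite (@sum_sym_eq (symcov g (L2 j.*2.+1)) (symcov g (L2 j.*2.+1)) (L2 j.*2.+3)
       (symcov g (L1 j.*2.+2)) Q (q t) v (- (3 / (j.*2.+2)%:R)) (j.*2.+3)%:R); last first.
      move=> a b; rewrite HAj //.
        by lia.
      by rewrite /= odd_double.
    rewrite /Ct /P3 /Bt /Dt /= !doubleS.
    by field; rewrite nz2.
  rewrite (@sum_sym_eq L3 L3 (L2 1%N) (symcov g (L1 0%N)) Q (q t) v 3 1); last first.
    by move=> a b; rewrite H0 // mul1r.
  rewrite !sumrB -mulr_sumr /Bt /Dt /Z /= expr0.
  have d0 : (0.*2 = 0)%N by []. rewrite !d0. ring.
have H4 : is_derive t (1:R)
   (fun s => \sum_(0 <= j < l.+1) s ^+ j.*2.+1 * ((j.*2.+1)%:R)^-1 * c1 (L1 j.*2) Q (q s))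
   ((Dt 0%N + \sum_(0 <= j < l) Dt j.+1) + (2 * \sum_(0 <= j < l) S j - \sum_(0 <= j < l) Ct j)
     + 2 * S l).
  pose W j := t ^+ j.*2.+1 * ((j.*2.+1)%:R)^-1 *
     \sum_(a < n) pd a (c1 (L1 j.*2) Q) (q t) * v 0 a.
  have D := @natsum_is_derive _ l.+1
    (fun j s => s ^+ j.*2.+1 * ((j.*2.+1)%:R)^-1 * c1 (L1 j.*2) Q (q s))
    (fun j => (j.*2.+1)%:R * t ^+ (j.*2.+1).-1 * ((j.*2.+1)%:R)^-1 * c1 (L1 j.*2) Q (q t)
       + W j) t
    (fun j jl => dterm _ _ (d_scalar sol It (c1_diff (sL1 j jl) sQ Uq))).
  apply: is_derive_eq D _.
  rewrite (@eq_big_nat _ _ _ 0 l.+1 _ (fun j => Dt j + W j)); last first.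
    move=> j _; rewrite /Dt /=; congr (_ + _); by field; rewrite nz1.
  rewrite big_split /= [X in X + _ = _](big_nat_recl l) // [X in _ + X = _](big_nat_recr l) //=.
  have WL : W l = 2 * S l.
    rewrite /W (@sum_pd_eq _ (L2 l.*2.+1) (L1 l.*2.+2) Q (q t) v (2 * (l.*2.+1)%:R) 0); last first.
      by move=> a; rewrite (HB a (q t) Uq) mul0r subr0.
    by rewrite /S /=; field; rewrite nz1.
  rewrite WL.
  rewrite (@eq_big_nat _ _ _ 0 l W (fun j => 2 * S j - Ct j)); last first.
    move=> j /andP[_ jl].
    have e3 : (j.*2.+2 - 2 = j.*2)%N by lia.
    have HCj := HC j.*2.+2.
    rewrite e3 in HCj.
    rewrite /W (@sum_pd_eq _ (L2 j.*2.+1) (L1 j.*2.+2) Q (q t) v (2 * (j.*2.+1)%:R)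
       ((j.*2.+2 * j.*2.+1)%:R)); last first.
      move=> a; rewrite HCj //.
        by lia.
      by rewrite /= odd_double.
    rewrite /S /Ct /= natrM.
    by field; rewrite nz1.
  by rewrite sumrB -mulr_sumr; ring.
have := dD (dD (dD (dB G0 H1) H2) H3) H4.
have -> : (fun s => contr L3 (q s) (derive1 q s) -
   \sum_(0 <= j < l) s ^+ j.*2.+2 * ((j.*2.+2)%:R)^-1 *
               contr (symcov g (L2 j.*2.+1)) (q s) (derive1 q s) +
   \sum_(0 <= j < l.+1) s ^+ j.*2.+1 * contr (L2 j.*2.+1) (q s) (derive1 q s) +
   \sum_(0 <= j < l.+1) s ^+ j.*2 * contr (L1 j.*2) (q s) (derive1 q s) +
   \sum_(0 <= j < l.+1) s ^+ j.*2.+1 * ((j.*2.+1)%:R)^-1 * c1 (L1 j.*2) Q (q s)) =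
  (fun s => (contr L3 (q s) (derive1 q s)
         - \sum_(1 <= j < l.+1) s ^+ j.*2 / (j.*2)%:R * contr (symcov g (L2 j.*2.-1)) (q s) (derive1 q s))
        + \sum_(j < l.+1) s ^+ j.*2.+1 * contr (L2 j.*2.+1) (q s) (derive1 q s)
        + \sum_(j < l.+1) s ^+ j.*2 * contr (L1 j.*2) (q s) (derive1 q s)
        + \sum_(j < l.+1) s ^+ j.*2.+1 / (j.*2.+1)%:R * c1 (L1 j.*2) Q (q s)).
  apply/funext => s; rewrite !big_mkord big_add1 /= !big_mkord.
  reflexivity.
move=> H; apply: is_derive_eq H _; ring.
Qed.

End CFI.

Unset Implicit Arguments.

Theorem theorem1 (R : realType) (n : nat) (U : set 'rV[R]_n)
  (g : 'rV[R]_n -> 'M[R]_n) (Q : 'rV[R]_n -> 'rV[R]_n) :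
  open U -> metric_on U g -> (forall a, smooth_on U (fun x => Q x 0 a)) ->
  (* (CFI 1) *)
  (forall (l : nat) (L2 : nat -> tfield R n 2) (L1 : nat -> tfield R n 1)
          (G : 'rV[R]_n -> R),
    (1 <= l)%N ->
    (forall j, (j <= l)%N -> tsmooth U (L2 j.*2) /\ tsymmetric U (L2 j.*2)) ->
    (forall j, (1 <= j <= l)%N -> tsmooth U (L1 j.*2.-1)) ->
    smooth_on U G ->
    (forall j, (j < l)%N -> killing g U (symcov g (L2 j.*2))) ->
    killing g U (L2 l.*2) ->
    (forall k, (2 <= k <= l.*2)%N -> ~~ odd k -> forall a b x, U x ->
       symcov g (L1 k.-1) (ix2 a b) x =
         - (3 / (k.-1)%:R) * c3 (symcov g (L2 (k - 2)%N)) a b Q x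
         - k%:R * L2 k (ix2 a b) x) ->
    (forall a x, U x ->
       pd a (c1 (L1 l.*2.-1) Q) x = 4 * l%:R * c2 (L2 l.*2) a Q x) ->
    (forall k, (3 <= k <= l.*2.-1)%N -> odd k -> forall a x, U x ->
       pd a (c1 (L1 (k - 2)%N) Q) x =
         2 * (k.-1)%:R * c2 (L2 k.-1) a Q x - (k * k.-1)%:R * L1 k (ix1 a) x) ->
    (forall a x, U x -> pd a G x = 2 * c2 (L2 0%N) a Q x - L1 1%N (ix1 a) x) ->
    first_integral g Q U (fun t x v =>
        - (\sum_(j < l) t ^+ j.*2.+1 / (j.*2.+1)%:R * contr (symcov g (L2 j.*2)) x v)
        + \sum_(j < l.+1) t ^+ j.*2 * contr (L2 j.*2) x v
        + \sum_(1 <= j < l.+1) t ^+ j.*2.-1 * contr (L1 j.*2.-1) x v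
        + \sum_(1 <= j < l.+1) t ^+ j.*2 / (j.*2)%:R * c1 (L1 j.*2.-1) Q x
        + G x)) /\
  (* (CFI 2) *)
  (forall (l : nat) (L3 : tfield R n 3) (L2 : nat -> tfield R n 2)
          (L1 : nat -> tfield R n 1),
    tsmooth U L3 -> killing g U L3 ->
    (forall j, (j <= l)%N -> tsmooth U (L2 j.*2.+1) /\ tsymmetric U (L2 j.*2.+1)) ->
    (forall j, (j <= l)%N -> tsmooth U (L1 j.*2)) ->
    (forall j, (j < l)%N -> killing g U (symcov g (L2 j.*2.+1))) ->
    killing g U (L2 l.*2.+1) ->
    (forall a b x, U x ->
       symcov g (L1 0%N) (ix2 a b) x = 3 * c3 L3 a b Q x - L2 1%N (ix2 a b) x) ->
    (forall k, (3 <= k <= l.*2.+1)%N -> odd k -> forall a b x, U x ->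
       symcov g (L1 k.-1) (ix2 a b) x =
         - (3 / (k.-1)%:R) * c3 (symcov g (L2 (k - 2)%N)) a b Q x
         - k%:R * L2 k (ix2 a b) x) ->
    (forall a x, U x ->
       pd a (c1 (L1 l.*2) Q) x = 2 * (l.*2.+1)%:R * c2 (L2 l.*2.+1) a Q x) ->
    (forall k, (2 <= k <= l.*2)%N -> ~~ odd k -> forall a x, U x ->
       pd a (c1 (L1 (k - 2)%N) Q) x =
         2 * (k.-1)%:R * c2 (L2 k.-1) a Q x - (k * k.-1)%:R * L1 k (ix1 a) x) ->
    first_integral g Q U (fun t x v =>
        (contr L3 x v
         - \sum_(1 <= j < l.+1) t ^+ j.*2 / (j.*2)%:R * contr (symcov g (L2 j.*2.-1)) x v)
        + \sum_(j < l.+1) t ^+ j.*2.+1 * contr (L2 j.*2.+1) x v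
        + \sum_(j < l.+1) t ^+ j.*2 * contr (L1 j.*2) x v
        + \sum_(j < l.+1) t ^+ j.*2.+1 / (j.*2.+1)%:R * c1 (L1 j.*2) Q x)) /\
  (* (CFI 3) *)
  (forall (lam : R) (L2 : tfield R n 2) (L1 : tfield R n 1),
    lam != 0 ->
    tsmooth U L2 -> tsymmetric U L2 -> tsmooth U L1 ->
    killing g U (symcov g L2) ->
    (forall a b x, U x ->
       symcov g L1 (ix2 a b) x =
         - (3 / lam) * c3 (symcov g L2) a b Q x - lam * L2 (ix2 a b) x) ->
    (forall a x, U x ->
       pd a (c1 L1 Q) x = 2 * lam * c2 L2 a Q x - lam ^+ 2 * L1 (ix1 a) x) ->
    first_integral g Q U (fun t x v =>
        expR (lam * t) *
          (- contr (symcov g L2) x v + lam * contr L2 x v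
           + lam * contr L1 x v + c1 L1 Q x))).
Proof.
move=> oU mg sQ; split; first exact: cfi1.
split; first exact: cfi2.
exact: cfi3.
Qed.
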